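(* Let $F$ be a field of characteristic zero and $n,m$ natural numbers. If an ideal $I$ of $W(n,m)$ contains $\partial_i$ for some $1\le i\le n+m$, then $I=W(n,m)$.
   Context: $W(n,m)$ has basis $e^{\alpha}x^{\beta}\partial_i$ ($\alpha\in\mathbb Z^n$, $\beta\in\mathbb Z^{n+m}$, $1\le i\le n+m$), realized as vector fields $f\partial_i$ with $f$ in the commutative algebra with basis $e^{\alpha}x^{\beta}$ (multiplication adding exponents), $\partial_i(e^{\alpha}x^{\beta})=a_ie^{\alpha}x^{\beta}+b_ie^{\alpha}x^{\beta-\epsilon_i}$ with $a_i:=0$ for $i>n$, and bracket $[f\partial_i,g\partial_j]=f\partial_i(g)\partial_j-g\partial_j(f)\partial_i$; $\partial_i$ denotes the basis element $e^{0}x^{0}\partial_i$. *)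

(* Defs.v *)
From HB Require Import structures.
From mathcomp Require Import all_boot all_order all_algebra.
From mathcomp Require Import finmap.
From mathcomp.multinomials Require Import monalg.
Set Implicit Arguments. Unset Strict Implicit. Unset Printing Implicit Defensive.
Import Order.TTheory GRing.Theory Num.Theory.
Local Open Scope ring_scope.

(* The Lie algebra W(n,m) over a field F.
   A basis index (alpha, beta, i) stands for e^alpha x^beta \partial_i with
   alpha in Z^n, beta in Z^(n+m), i in {1..n+m} (here 0-based: i : 'I_(n+m)). *)
Definition Widx (n m : nat) : choiceType :=
  (n.-tuple int * (n + m).-tuple int * 'I_(n + m))%type.

Definition W (F : fieldType) (n m : nat) := {malg F[Widx n m]}.

Definition tadd k (a b : k.-tuple int) : k.-tuple int :=
  [tuple tnth a j + tnth b j | j < k].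

Definition tsubeps k (b : k.-tuple int) (i : 'I_k) : k.-tuple int :=
  [tuple tnth b j - (j == i)%:Z | j < k].

(* a_i(alpha): the i-th coordinate of alpha when i < n (0-based), 0 otherwise *)
Definition acoef n (a : n.-tuple int) (i : nat) : int := nth 0%Z (val a) i.

Definition Wb (F : fieldType) n m (k : Widx n m) : W F n m := << k >>.

(* bracket of basis elements:
   [e^a x^b d_i, e^c x^d d_j]
     = c_i e^(a+c) x^(b+d) d_j + d_i e^(a+c) x^(b+d-eps_i) d_j
       - a_j e^(a+c) x^(b+d) d_i - b_j e^(a+c) x^(b+d-eps_j) d_i *)
Definition brB (F : fieldType) n m (k l : Widx n m) : W F n m :=
  let: (a, b, i) := k in
  let: (c, d, j) := l in
  let ac := tadd a c in
  let bd := tadd b d in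
    (acoef c i)%:~R *: Wb F (ac, bd, j)
  + (tnth d i)%:~R *: Wb F (ac, tsubeps bd i, j)
  - (acoef a j)%:~R *: Wb F (ac, bd, i)
  - (tnth b j)%:~R *: Wb F (ac, tsubeps bd j, i).

Definition Wbr (F : fieldType) n m (u v : W F n m) : W F n m :=
  \sum_(k <- msupp u) \sum_(l <- msupp v) (u@_k * v@_l) *: brB F k l.

Definition Wd (F : fieldType) n m (i : 'I_(n + m)) : W F n m :=
  Wb F ([tuple 0%Z | _ < n], [tuple 0%Z | _ < n + m], i).

Definition is_ideal (F : fieldType) n m (I : W F n m -> Prop) : Prop :=
  [/\ I 0,
      (forall x y, I x -> I y -> I (x + y)),
      (forall (c : F) x, I x -> I (c *: x)) &
      (forall x y, I y -> I (Wbr x y))].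

(* Main.v *)
Require Import Defs.
From HB Require Import structures.
From mathcomp Require Import all_boot all_order all_algebra.
From mathcomp Require Import finmap.
From mathcomp.multinomials Require Import monalg.
Set Implicit Arguments. Unset Strict Implicit. Unset Printing Implicit Defensive.
Import GRing.Theory.
Local Open Scope ring_scope.

Definition z0 k : k.-tuple int := [tuple 0%Z | _ < k].
Definition ee n m (i : 'I_(n + m)) : (n + m).-tuple int :=
  [tuple (j == i)%:Z | j < n + m].

Lemma taddC k (a b : k.-tuple int) : tadd a b = tadd b a.
Proof. by apply: eq_from_tnth => j; rewrite !tnth_mktuple addrC. Qed.

Lemma tadd0 k (a : k.-tuple int) : tadd (z0 k) a = a.
Proof. by apply: eq_from_tnth => j; rewrite !tnth_mktuple add0r. Qed.

Lemma tnth0 k (j : 'I_k) : tnth (z0 k) j = 0%Z.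
Proof. by rewrite tnth_mktuple. Qed.

Lemma acoef0 k (j : nat) : acoef (z0 k) j = 0%Z.
Proof.
rewrite /acoef; case: (ltnP j k) => h; last by rewrite nth_default // size_tuple.
by rewrite -(tnth_nth 0%Z (z0 k) (Ordinal h)) tnth0.
Qed.

Lemma tsub_add n m (i : 'I_(n + m)) d : tsubeps (tadd (ee i) d) i = d.
Proof.
by apply: eq_from_tnth => j; rewrite !tnth_mktuple [_ + tnth d j]addrC addrK.
Qed.

Lemma tnth_add_ee n m (i : 'I_(n + m)) d : tnth (tadd (ee i) d) i = (tnth d i + 1)%R.
Proof. by rewrite !tnth_mktuple eqxx addrC. Qed.

Lemma sum_msuppU (F : fieldType) (K: choiceType) (V : lmodType F) (k:K) (f: K -> V) :
  \sum_(x <- msupp (<<k>> : {malg F[K]})) f x = f k.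
Proof. by rewrite msuppU oner_eq0 big_seq_fset1. Qed.

Lemma WbrB (F : fieldType) n m (k l : Widx n m) : Wbr (Wb F k) (Wb F l) = brB F k l.
Proof.
have h1 := @sum_msuppU F (Widx n m) (W F n m) k (fun k0 => \sum_(l0 <- msupp (Wb F l)) ((Wb F k)@_k0 * (Wb F l)@_l0) *: brB F k0 l0).
apply: (etrans h1) => /=.
have h2 := @sum_msuppU F (Widx n m) (W F n m) l (fun l0 => ((Wb F k)@_k * (Wb F l)@_l0) *: brB F k l0).
apply: (etrans h2) => /=.
have h3 := (@mcoeffUU (Widx n m) F k 1).
have h4 := (@mcoeffUU (Widx n m) F l 1).
rewrite /Wb h3 h4. by rewrite mulr1 scale1r.
Qed.

Lemma oppB4 (V : zmodType) (x y z u : V) : z + u - x - y = - (x + y - z - u).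
Proof. by rewrite !opprB opprD -!addrA addrCA. Qed.

Lemma brB_anti (F : fieldType) n m (k l : Widx n m) : brB F l k = - brB F k l.
Proof.
case: k => [[a b] i]; case: l => [[c d] j] /=.
rewrite (@taddC _ a c) (@taddC _ b d).
apply: oppB4.
Qed.

Lemma gen4 (F : fieldType) (V : lmodType F) (a b : F) (X Y Z U : V) :
  a *: X + b *: Y - 0 *: Z - 0 *: U = a *: X + b *: Y.
Proof. by rewrite !scale0r !subr0. Qed.

Lemma L1 (F : fieldType) n m (i : 'I_(n + m)) c d j :
  brB F (z0 n, z0 (n + m), i) (c, tadd (ee i) d, j) =
  (acoef c i)%:~R *: Wb F (c, tadd (ee i) d, j) + (tnth d i + 1)%:~R *: Wb F (c, d, j).
Proof.
rewrite /= !tadd0 acoef0 tnth0 (tsub_add i d) tnth_add_ee !mulr0z.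
Time apply: gen4.
Qed.

Lemma gen5 (F : fieldType) (V : lmodType F) (a b e f : F) (X Y Z U : V) :
  e = 0 -> f = 0 ->
  a *: X + b *: Y - 0 *: Z - f *: U = a *: X + b *: Y - e *: Y.
Proof. by move=> -> ->; rewrite !scale0r !subr0. Qed.

Lemma gen6 (F : fieldType) (V : lmodType F) (a b e f : F) (X Y Z : V) :
  e = 1 -> f = 1 ->
  a *: X + b *: Y - 0 *: Z - f *: Y = a *: X + b *: Y - e *: Y.
Proof. by move=> -> ->; rewrite !scale0r !subr0. Qed.

Lemma L2 (F : fieldType) n m (i : 'I_(n + m)) c d j :
  brB F (z0 n, ee i, i) (c, d, j) =
  (acoef c i)%:~R *: Wb F (c, tadd (ee i) d, j) + (tnth d i)%:~R *: Wb F (c, d, j)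
   - (j == i)%:R *: Wb F (c, d, j).
Proof.
rewrite /= !tadd0 acoef0 (tsub_add i d) !mulr0z.
case: (eqVneq j i) => [eji|ne].
  subst j. rewrite (tsub_add i d). apply: gen6 => //.
  by rewrite tnth_mktuple eqxx.
apply: gen5 => //.
by rewrite tnth_mktuple (negbTE ne).
Qed.

Lemma comb (F : fieldType) (V : lmodType F) (A T : V) (D D1 e : F) :
  D1 = D + 1 ->
  - (A + D *: T - e *: T) - - (A + D1 *: T) = (e + 1) *: T.
Proof.
move=> ->.
rewrite opprK opprB !scalerDl scale1r (addrA A) addrA.
by rewrite addrNK.
Qed.

Lemma gen7 (F : fieldType) (V : lmodType F) (a b : F) (X Y : V) :
  a = 0 -> b = 2%:R -> - (a *: X + b *: Y) = (- 2%:R) *: Y.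
Proof. by move=> -> ->; rewrite scale0r add0r scaleNr. Qed.

Lemma monU (F : fieldType) (K : choiceType) (k : K) (c : F) :
  << c *g k >> = c *: (<< k >> : {malg F[K]}).
Proof.
by apply/malgP => k'; rewrite mcoeffZ !mcoeffU mulr_natr.
Qed.

Lemma sum_closed (V : zmodType) (P : V -> Prop) (T : Type) (s : seq T) (f : T -> V) :
  P 0 -> (forall x y, P x -> P y -> P (x + y)) -> (forall k, P (f k)) ->
  P (\sum_(k <- s) f k).
Proof.
move=> P0 PD Pf; elim: s => [|a s IH]; first by rewrite big_nil.
by rewrite big_cons; apply: PD.
Qed.

Unset Implicit Arguments.

Theorem lemma2 (F : fieldType) (n m : nat) (charF0 : [pchar F] =i pred0)
  (I : W F n m -> Prop) (HI : is_ideal I) (i : 'I_(n + m)) (Hi : I (Wd F i)) :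
  forall x : W F n m, I x.
Proof.
move=> x.
case: HI => I0 IDD IZ IBr.
have IB : forall u v, I u -> I v -> I (u - v).
  move=> u v Hu Hv; apply: IDD => //. rewrite -scaleN1r; exact: IZ.
have Iinv : forall (c : F) u, c != 0 -> I (c *: u) -> I u.
  move=> c u c0 H; have := IZ c^-1 _ H; by rewrite scalerA mulVf // scale1r.
have n2 : (2%:R : F) != 0.
  by rewrite natf_neq0_pchar pnatE // inE /= charF0.
have EI : I (Wb F (z0 n, ee i, i)).
  have h : I (Wbr (Wb F (z0 n, tadd (ee i) (ee i), i)) (Wb F (z0 n, z0 (n + m), i))) := IBr _ _ Hi.
  have e1 := etrans (WbrB F (z0 n, tadd (ee i) (ee i), i) (z0 n, z0 (n+m), i)) (brB_anti F _ _).
  rewrite L1 in e1.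
  rewrite gen7 in e1; [|by rewrite acoef0 mulr0z|by rewrite tnth_mktuple eqxx].
  rewrite e1 in h.
  by apply: (Iinv _ _ _ h); rewrite oppr_eq0.
have TI : forall k, I (Wb F k).
  move=> [[c d] j].
  have P : I (Wbr (Wb F (c, d, j)) (Wb F (z0 n, ee i, i))) := IBr _ _ EI.
  have Q : I (Wbr (Wb F (c, tadd (ee i) d, j)) (Wb F (z0 n, z0 (n + m), i))) := IBr _ _ Hi.
  have R := IB _ _ P Q.
  have e : Wbr (Wb F (c, d, j)) (Wb F (z0 n, ee i, i))
         - Wbr (Wb F (c, tadd (ee i) d, j)) (Wb F (z0 n, z0 (n + m), i))
         = ((j == i)%:R + 1) *: Wb F (c, d, j).
    have e1 := etrans (WbrB F (c, d, j) (z0 n, ee i, i)) (brB_anti F _ _).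
    rewrite L2 in e1.
    have e2 := etrans (WbrB F (c, tadd (ee i) d, j) (z0 n, z0 (n + m), i)) (brB_anti F _ _).
    rewrite L1 in e2.
    apply: (etrans (f_equal2 (fun a b => a - b) e1 e2)).
    apply: comb.
    by rewrite intrD mulr1z.
  rewrite e in R.
  apply: (Iinv _ _ _ R).
  case: (j == i) => /=; first exact: n2.
  by rewrite add0r oner_eq0.
rewrite (monalgE x).
apply: sum_closed; [exact: I0 | exact: IDD | move=> k].
exact: (eq_ind _ I (IZ (x@_k) _ (TI k)) _ (esym (monU k (x@_k)))).
Qed.
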